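(* Let $\mathcal{S}=\{S_1,\dots,S_N\}\subset\mathbb{R}^Q_{\ge0}$, let $\Delta$ be a diagonal matrix with positive diagonal entries, and let $\rho\in\mathbb{R}^Q$ with all $\rho_q>0$ satisfy $\rho\notin\mathcal{P}$. Then there exists exactly one vector $\eta$ (a ''fixed point'') such that $$\eta=\Big[\rho-\sum_m\alpha_mS_m\Big]^+,\quad \alpha_m\ge0,\quad \sum_m\alpha_m=1,\quad \alpha_m>0\implies\langle\eta,\Delta S_m\rangle\ge\langle\eta,\Delta S_k\rangle\ \ \forall k.$$
   Context: $[x]^+$ is the componentwise positive part; $\langle x,y\rangle=\sum_qx_qy_q$. Stability region $\mathcal{P}=\{r\in\mathbb{R}^Q_{\ge0}: r\le\sum_n\alpha_nS_n\text{ componentwise for some }\alpha_n\ge0,\sum_n\alpha_n=1\}$. *)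

(* Defs.v *)
From HB Require Import structures.
From mathcomp Require Import all_boot all_order all_algebra.
From mathcomp Require Import reals.
Set Implicit Arguments. Unset Strict Implicit. Unset Printing Implicit Defensive.
Import Order.TTheory GRing.Theory Num.Theory.
Local Open Scope ring_scope.

(* Vectors of R^Q are column vectors 'cV[R]_Q; component q is x q 0. *)

Definition pospart (R : realType) (Q : nat) (x : 'cV[R]_Q) : 'cV[R]_Q :=
  \col_q Num.max (x q 0) 0.

Definition ip (R : realType) (Q : nat) (x y : 'cV[R]_Q) : R :=
  \sum_(q < Q) x q 0 * y q 0.

Definition is_prob (R : realType) (N : nat) (alpha : 'I_N -> R) : Prop :=
  (forall n, 0 <= alpha n) /\ \sum_(n < N) alpha n = 1.

Definition stab_region (R : realType) (Q N : nat) (S : 'I_N -> 'cV[R]_Q)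
  (r : 'cV[R]_Q) : Prop :=
  (forall q, 0 <= r q 0) /\
  exists alpha : 'I_N -> R, is_prob alpha /\
    forall q, r q 0 <= (\sum_(n < N) alpha n *: S n) q 0.

Definition fixed_point (R : realType) (Q N : nat) (S : 'I_N -> 'cV[R]_Q)
  (Delta : 'M[R]_Q) (rho eta : 'cV[R]_Q) : Prop :=
  exists alpha : 'I_N -> R,
    is_prob alpha /\
    eta = pospart (rho - \sum_(m < N) alpha m *: S m) /\
    forall m, 0 < alpha m ->
      forall k, ip eta (Delta *m S k) <= ip eta (Delta *m S m).

(* Main.v *)
Require Import Defs.
From HB Require Import structures.
From mathcomp Require Import all_boot all_order all_algebra.
From mathcomp Require Import reals.
From mathcomp Require Import all_classical all_reals all_analysis.
From mathcomp Require Import ring lra.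
Import Order.TTheory GRing.Theory Num.Theory.
Local Open Scope classical_set_scope.
Local Open Scope ring_scope.
Import numFieldNormedType.Exports.

Section Topo.
Variable R : realType.

Lemma cont_sum (T : topologicalType) n (g : 'I_n -> T -> R) :
  (forall i, continuous (g i)) -> continuous (fun x => \sum_(i < n) g i x).
Proof.
elim: n g => [|n IH] g hg.
  under eq_fun do rewrite big_ord0.
  exact: cst_continuous.
under eq_fun do rewrite big_ord_recr /=.
move=> x; apply: (@continuousD R R^o T (fun x => \sum_(i < n) g (widen_ord (leqnSn n) i) x) (g ord_max) x).
  by apply: IH => i; apply: hg.
exact: hg.
Qed.

Definition simplex N (v : 'rV[R]_N) : Prop :=
  (forall i, 0 <= v ord0 i) /\ \sum_(i < N) v ord0 i = 1.

Arguments simplex {N} v.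

Lemma simplex_min N (f : 'rV[R]_N -> R) : (0 < N)%N -> continuous f ->
  exists2 c, simplex c & forall t, simplex t -> f c <= f t.
Proof.
move=> N0 cf.
have ne : (@simplex N) !=set0.
  exists (\row_i (if i == Ordinal N0 then 1 else 0)); split.
    by move=> i; rewrite mxE; case: ifP.
  rewrite (bigD1 (Ordinal N0)) //= mxE eqxx big1 ?addr0 // => i /negbTE.
  by rewrite mxE => ->.
have cl : closed (@simplex N).
  have -> : @simplex N = (\bigcap_(i in setT) ((fun v : 'rV[R]_N => v ord0 i) @^-1` [set x | 0 <= x]))
      `&` ((fun v : 'rV[R]_N => \sum_(i < N) v ord0 i) @^-1` [set x | x = 1]).
    apply/seteqP; split => v.
      by move=> [h1 h2]; split => //= i _; apply: h1.
    by move=> [h1 h2]; split => //= i; apply: h1.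
  apply: closedI.
    apply: closed_bigI => i _.
    move: (@closed_ge R 0); apply: (proj1 (continuous_closedP _)).
    exact: coord_continuous.
  move: (@closed_eq R 1); apply: (proj1 (continuous_closedP _)).
  apply: cont_sum => i; exact: coord_continuous.
have cp : compact (@simplex N).
  apply: (subclosed_compact cl (@rV_compact _ N (fun _ => `[(0:R), 1]%classic) (fun _ => @segment_compact R 0 1))).
  move=> v [h1 h2] i /=; rewrite in_itv /= h1 /= -h2.
  rewrite (bigD1 i) //= lerDl; apply: sumr_ge0 => j _; exact: h1.
have [c cin cmin] := EVT_min_rV ne cp (continuous_subspaceT cf).
exists c; first by move: cin; rewrite inE.
by move=> t tin; apply: cmin; rewrite inE.
Qed.
End Topo.

Section Alg.
Variable R : realType.

Lemma sc1 (a t : R) : Num.max (a + t) 0 ^+ 2 <= Num.max a 0 ^+ 2 + 2 * t * Num.max a 0 + t ^+ 2.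
Proof.
case: (lerP 0 a) => ha; case: (lerP 0 (a + t)) => hat;
  rewrite ?(max_l ha) ?(max_l hat) ?(max_r (ltW ha)) ?(max_r (ltW hat)); nra.
Qed.

Lemma sc2 (a b : R) : (Num.max a 0 - Num.max b 0) * (b - a) <= - (Num.max a 0 - Num.max b 0) ^+ 2.
Proof.
case: (lerP 0 a) => ha; case: (lerP 0 b) => hb;
  rewrite ?(max_l ha) ?(max_l hb) ?(max_r (ltW ha)) ?(max_r (ltW hb)); nra.
Qed.

Lemma diag_mul Q (D : 'M[R]_Q) (x : 'cV[R]_Q) q : is_diag_mx D -> (D *m x) q 0 = D q q * x q 0.
Proof.
move=> /is_diag_mxP hD; rewrite mxE (bigD1 q) //= big1 ?addr0 // => j hj.
by rewrite hD ?mul0r // eq_sym.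
Qed.
End Alg.

Section Main.
Variables (R : realType) (Q N : nat) (S : 'I_N -> 'cV[R]_Q)
  (Delta : 'M[R]_Q) (rho : 'cV[R]_Q).
Hypothesis hD : is_diag_mx Delta.

Definition Vq (a : 'I_N -> R) q := \sum_(m < N) a m * S m q 0.

Lemma Vq_E a q : (\sum_(m < N) a m *: S m) q 0 = Vq a q.
Proof. rewrite summxE; apply: eq_bigr => m _; by rewrite mxE. Qed.

Lemma eta_E a q : (pospart (rho - \sum_(m < N) a m *: S m)) q 0 = Num.max (rho q 0 - Vq a q) 0.
Proof. rewrite !mxE; congr (Num.max (_ - _) _); exact: Vq_E. Qed.

Lemma ipE (eta x : 'cV[R]_Q) : ip eta (Delta *m x) = \sum_(q < Q) eta q 0 * (Delta q q * x q 0).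
Proof. rewrite /ip; apply: eq_bigr => q _; by rewrite diag_mul. Qed.

Lemma conv_sum (a : 'I_N -> R) eta :
  \sum_(m < N) a m * ip eta (Delta *m S m) = \sum_(q < Q) eta q 0 * Delta q q * Vq a q.
Proof.
under eq_bigr do rewrite ipE mulr_sumr.
rewrite exchange_big /=; apply: eq_bigr => q _.
rewrite /Vq mulr_sumr; apply: eq_bigr => m _; ring.
Qed.

Lemma fp_opt a eta : is_prob a ->
  (forall m, 0 < a m -> forall k, ip eta (Delta *m S k) <= ip eta (Delta *m S m)) ->
  forall b, is_prob b ->
  \sum_(m < N) b m * ip eta (Delta *m S m) <= \sum_(m < N) a m * ip eta (Delta *m S m).
Proof.
move=> [a0 a1] ha b [b0 b1].
have [m0 hm0] : exists m, 0 < a m.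
  case: (pickP (fun m => 0 < a m)) => [m hm|hn]; first by exists m.
  exfalso; have : \sum_(m < N) a m <= 0.
    by apply: sumr_le0 => m _; move: (hn m); rewrite lt_def a0 andbT => /negbFE/eqP ->.
  by rewrite a1 ler10.
set g := fun m => ip eta (Delta *m S m).
apply: (@le_trans _ _ (g m0)).
  rewrite -[leRHS]mul1r -b1 mulr_suml; apply: ler_sum => m _.
  by apply: ler_wpM2l => //; apply: ha.
rewrite -[leLHS]mul1r -a1 mulr_suml; apply: ler_sum => m _.
case: (lerP (a m) 0) => hm.
  have -> : a m = 0 by apply/eqP; rewrite eq_le hm a0.
  by rewrite !mul0r.
by apply: ler_wpM2l => //; apply: ha.
Qed.

Hypothesis hDp : forall q, 0 < Delta q q.

Lemma uniq_fp e1 e2 : fixed_point S Delta rho e1 -> fixed_point S Delta rho e2 -> e1 = e2.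
Proof.
move=> [a1 [pa1 [E1 h1]]] [a2 [pa2 [E2 h2]]].
have i1 := @fp_opt a1 e1 pa1 h1 a2 pa2.
have i2 := @fp_opt a2 e2 pa2 h2 a1 pa1.
rewrite !conv_sum in i1 i2.
have key : \sum_(q < Q) Delta q q * (e1 q 0 - e2 q 0) ^+ 2 <= 0.
  have : 0 <= \sum_(q < Q) Delta q q * ((e1 q 0 - e2 q 0) * (Vq a1 q - Vq a2 q)).
    have : 0 <= (\sum_(q < Q) e1 q 0 * Delta q q * Vq a1 q - \sum_(q < Q) e1 q 0 * Delta q q * Vq a2 q)
      + (\sum_(q < Q) e2 q 0 * Delta q q * Vq a2 q - \sum_(q < Q) e2 q 0 * Delta q q * Vq a1 q).
      by apply: addr_ge0; rewrite subr_ge0.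
    rewrite -!sumrB -big_split /= => h; apply: (le_trans h).
    rewrite le_eqVlt; apply/orP; left; apply/eqP; apply: eq_bigr => q _; ring.
  move=> h; rewrite -oppr_ge0; apply: (le_trans h).
  rewrite -sumrN; apply: ler_sum => q _.
  rewrite E1 E2 !eta_E -mulrN; apply: ler_wpM2l; first exact: ltW.
  have := @sc2 R (rho q 0 - Vq a1 q) (rho q 0 - Vq a2 q).
  by rewrite (_ : rho q 0 - Vq a2 q - (rho q 0 - Vq a1 q) = Vq a1 q - Vq a2 q) //; ring.
apply/matrixP => q j; rewrite (ord1 j).
have : \sum_(q < Q) Delta q q * (e1 q 0 - e2 q 0) ^+ 2 = 0.
  apply/eqP; rewrite eq_le key /=; apply: sumr_ge0 => i _.
  by apply: mulr_ge0; [apply: ltW | apply: sqr_ge0].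
move/eqP; rewrite psumr_eq0; last first.
  by move=> i _; apply: mulr_ge0; [apply: ltW | apply: sqr_ge0].
move=> /allP /(_ q (mem_index_enum _)) /=.
rewrite mulf_eq0 (gt_eqF (hDp q)) /= sqrf_eq0 subr_eq0 => /eqP //.
Qed.
End Main.

Section Ex.
Variables (R : realType) (Q N : nat) (S : 'I_N -> 'cV[R]_Q)
  (Delta : 'M[R]_Q) (rho : 'cV[R]_Q).

Definition Fv (v : 'rV[R]_N) : R :=
  \sum_(q < Q) Delta q q * Num.max (rho q 0 - \sum_(m < N) v ord0 m * S m q 0) 0 ^+ 2.

Lemma Fv_cont : continuous Fv.
Proof.
apply: cont_sum => q.
have hl : continuous (fun v : 'rV[R]_N => rho q 0 - \sum_(m < N) v ord0 m * S m q 0).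
  move=> x; apply: (@continuousB R R^o); first exact: cst_continuous.
  apply: cont_sum => m y.
  apply: (@continuousM R _ (fun v : 'rV[R]_N => v ord0 m) (fun=> S m q 0)).
    exact: coord_continuous.
  exact: cst_continuous.
have hm : continuous (fun v : 'rV[R]_N => Num.max (rho q 0 - \sum_(m < N) v ord0 m * S m q 0) 0).
  move=> x; apply: (@continuous_max R _ (fun v : 'rV[R]_N => rho q 0 - \sum_(m < N) v ord0 m * S m q 0) (fun=> 0)).
    exact: hl.
  exact: cst_continuous.
set h := (fun v : 'rV[R]_N => Num.max (rho q 0 - \sum_(m < N) v ord0 m * S m q 0) 0) in hm *.
have -> : (fun v => Delta q q * h v ^+ 2) = (fun=> Delta q q) \* (h \* h).
  by apply: funext => v /=; rewrite expr2.
move=> x; apply: continuousM; first exact: cst_continuous.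
by apply: continuousM; apply: hm.
Qed.
End Ex.

Lemma sum_delta (R : realType) N (f : 'I_N -> R) k x :
  \sum_(i < N) (if i == k then x else 0) * f i = x * f k.
Proof.
rewrite (bigD1 k) //= eqxx big1 ?addr0 // => i /negbTE ->; by rewrite mul0r.
Qed.

Section Ex2.
Variables (R : realType) (Q N : nat) (S : 'I_N -> 'cV[R]_Q)
  (Delta : 'M[R]_Q) (rho : 'cV[R]_Q).
Hypothesis hD : is_diag_mx Delta.
Hypothesis hDp : forall q, 0 <= Delta q q.

Lemma exist_fp : (0 < N)%N -> exists eta, fixed_point S Delta rho eta.
Proof.
move=> N0.
have [c [c0 c1] cmin] := @simplex_min R N _ N0 (@Fv_cont R Q N S Delta rho).
pose a := fun m => c ord0 m.
pose e := pospart (rho - \sum_(m < N) a m *: S m).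
exists e, a; split; first by split.
split; first by [].
move=> m am k; rewrite leNgt; apply/negP => hlt.
pose d := ip e (Delta *m S k) - ip e (Delta *m S m).
have d0 : 0 < d by rewrite subr_gt0.
have km : k != m by apply/eqP => E; move: hlt; rewrite E ltxx.
pose K := \sum_(q < Q) Delta q q * (S k q 0 - S m q 0) ^+ 2.
have K0 : 0 <= K by apply: sumr_ge0 => q _; apply: mulr_ge0 => //; apply: sqr_ge0.
pose eps := Num.min (a m) (d / (K + 1)).
have K1 : 0 < K + 1 by apply: ltr_wpDl.
have eps0 : 0 < eps by rewrite lt_min am divr_gt0.
have eps1 : eps <= a m by rewrite ge_min lexx.
have eps2 : eps * (K + 1) <= d by rewrite -ler_pdivlMr // ge_min lexx orbT.
pose c' := \row_i (c ord0 i + (if i == k then eps else 0) - (if i == m then eps else 0)).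
have sc' : @simplex R N c'.
  split.
    move=> i; rewrite mxE; case: (eqVneq i m) => [->|im].
      have mk : m != k by rewrite eq_sym.
      rewrite (negbTE mk) addr0.
      rewrite ?eqxx subr_ge0; exact: eps1.
    rewrite subr0; apply: addr_ge0 => //; by case: ifP => // _; apply: ltW.
  under eq_bigr do rewrite mxE.
  rewrite sumrB big_split /= c1.
  have sd : forall j, \sum_(i < N) (if i == j then eps else 0) = eps.
    by move=> j; rewrite (bigD1 j) //= eqxx big1 ?addr0 // => i /negbTE ->.
  by rewrite !sd addrK.
have Vc' : forall q, \sum_(i < N) c' ord0 i * S i q 0 =
    \sum_(i < N) a i * S i q 0 + eps * (S k q 0 - S m q 0).
  move=> q; under eq_bigr do rewrite mxE mulrBl mulrDl.
  rewrite sumrB big_split /= !(@sum_delta R N); rewrite /a; ring.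
have hle := cmin c' sc'.
have : @Fv R Q N S Delta rho c' <= @Fv R Q N S Delta rho c - 2 * eps * d + eps ^+ 2 * K.
  rewrite /Fv.
  under eq_bigr do rewrite Vc'.
  have hd : d = \sum_(q < Q) Num.max (rho q 0 - \sum_(i < N) a i * S i q 0) 0 *
      (Delta q q * (S k q 0 - S m q 0)).
    rewrite /d !ipE // -sumrB; apply: eq_bigr => q _.
    rewrite (@eta_E R Q N S rho a q) /Vq; ring.
  rewrite hd /K !mulr_sumr -sumrB -big_split /=; apply: ler_sum => q _.
  have := @sc1 R (rho q 0 - \sum_(i < N) a i * S i q 0) (- (eps * (S k q 0 - S m q 0))).
  move=> h; rewrite (_ : rho q 0 - (\sum_(i < N) a i * S i q 0 + eps * (S k q 0 - S m q 0)) =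
     rho q 0 - \sum_(i < N) a i * S i q 0 + - (eps * (S k q 0 - S m q 0))); last by ring.
  have := ler_wpM2l (hDp q) h.
  move=> h2; apply: (le_trans h2); rewrite le_eqVlt; apply/orP; left; apply/eqP; rewrite /a; ring.
move=> h.
have : @Fv R Q N S Delta rho c' < @Fv R Q N S Delta rho c by nra.
by rewrite ltNge hle.
Qed.
End Ex2.

Theorem lemma10 (R : realType) (Q N : nat) (S : 'I_N -> 'cV[R]_Q)
  (Delta : 'M[R]_Q) (rho : 'cV[R]_Q) :
  (0 < N)%N ->
  (forall n q, 0 <= S n q 0) ->
  is_diag_mx Delta ->
  (forall q, 0 < Delta q q) ->
  (forall q, 0 < rho q 0) ->
  ~ stab_region S rho ->
  exists! eta : 'cV[R]_Q, fixed_point S Delta rho eta.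
Proof.
move=> N0 _ hD hDp _ _.
have [eta he] := @exist_fp R Q N S Delta rho hD (fun q => ltW (hDp q)) N0.
exists eta; split => // eta' he'.
exact: (@uniq_fp R Q N S Delta rho hD hDp eta eta' he he').
Qed.
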